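(* Let $j$ be a positive integer and $a$ an indeterminate (independent of $x$). Write $G(x)=\prod_{i=0}^{j-1}\frac{1+ax^2}{1+ix}=\sum_{N\ge0}G_Nx^N$ and $H(x)=\prod_{i=1-j}^{-1}\frac{1+ix}{1+ax^2}=\sum_{N\ge0}H_Nx^N$. Then for every $N\ge0$, \[G_N=\sum_{m=0}^{[N/2]}\binom{j}{m}Q_{N-2m}(j)\,a^m,\qquad H_N=\sum_{m=0}^{[N/2]}(-1)^N\binom{1-j}{m}\sigma_{N-2m}(j)\,a^m.\]
   Context: $\sigma_0(j)=1$, $\sigma_i(j)=\sum_{1\le n_1<\cdots<n_i\le j-1}n_1n_2\cdots n_i$ for $1\le i\le j-1$, $\sigma_i(j)=0$ for $i\ge j$; $Q_0(j)=1$, $Q_k(j)=-\sum_{i=1}^k\sigma_i(j)Q_{k-i}(j)$ for $k\ge1$. $\binom{\alpha}{m}=\alpha(\alpha-1)\cdots(\alpha-m+1)/m!$ is the generalized binomial coefficient, and $[x]$ is the integer part. *)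

(* Defs.v *)
From HB Require Import structures.
From mathcomp Require Import all_boot all_order all_algebra.
Set Implicit Arguments. Unset Strict Implicit. Unset Printing Implicit Defensive.
Import Order.TTheory GRing.Theory Num.Theory.
Local Open Scope ring_scope.

(* sigma_i(j) = sum_{1 <= n_1 < ... < n_i <= j-1} n_1 ... n_i, i.e. the sum over
   i-element subsets S of {1,...,j-1} of prod_{n in S} n.
   (sigma_0(j) = 1 via the empty set; sigma_i(j) = 0 for i >= j.) *)
Definition sigma (i j : nat) : rat :=
  \sum_(S : {set 'I_j} | (#|S| == i) && [forall n in S, (0 < (n : nat))%N])
     \prod_(n in S) (n : nat)%:R.

(* Q_0(j) = 1, Q_k(j) = - sum_{i=1}^k sigma_i(j) Q_{k-i}(j); Qseq k j = [:: Q_0; ...; Q_k]. *)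
Fixpoint Qseq (k j : nat) : seq rat :=
  match k with
  | 0 => [:: 1]
  | k'.+1 => rcons (Qseq k' j)
      (- \sum_(i < k'.+1) sigma i.+1 j * nth 0 (Qseq k' j) (k' - i)%N)
  end.
Definition Q (k j : nat) : rat := nth 0 (Qseq k j) k.

Definition gbinom (alpha : rat) (m : nat) : rat :=
  (\prod_(k < m) (alpha - k%:R)) / (m`!)%:R.

(* formal power series over a commutative ring, as coefficient sequences *)
Definition psmul (R : comRingType) (f g : nat -> R) : nat -> R :=
  fun n => \sum_(k < n.+1) f k * g (n - k)%N.
Definition psone (R : comRingType) : nat -> R := fun n => (n == 0%N)%:R.
Definition psprod (R : comRingType) (s : seq (nat -> R)) : nat -> R :=
  foldr (@psmul R) (@psone R) s.
Definition poly_ps (R : comRingType) (p : {poly R}) : nat -> R := fun n => p`_n.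
(* expansion of 1/(1 + c x) *)
Definition inv_lin (R : comRingType) (c : R) : nat -> R := fun n => (- c) ^+ n.
(* expansion of 1/(1 + a x^2) *)
Definition inv_quad (R : comRingType) (a : R) : nat -> R :=
  fun n => if odd n then 0 else (- a) ^+ n./2.

Definition Gser (R : comRingType) (a : R) (j : nat) : nat -> R :=
  psprod [seq psmul (poly_ps (1 + a *: 'X^2)) (inv_lin (i%:R : R)) | i <- iota 0 j].
(* H(x) = prod_{i=1-j}^{-1} (1 + i x)/(1 + a x^2); i = -k for k = 1..j-1 *)
Definition Hser (R : comRingType) (a : R) (j : nat) : nat -> R :=
  psprod [seq psmul (poly_ps (1 + (- (k%:R : R)) *: 'X)) (inv_quad a)
         | k <- iota 1 j.-1].

(* Main.v *)
Require Import Defs.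
From HB Require Import structures.
From mathcomp Require Import all_boot all_order all_algebra.
From mathcomp Require Import ring lra.
From Stdlib Require Import FunctionalExtensionality.
Set Implicit Arguments. Unset Strict Implicit. Unset Printing Implicit Defensive.
Import Order.TTheory GRing.Theory Num.Theory.
Local Open Scope ring_scope.

Section PS.
Variable R : comRingType.
Implicit Types f g h : nat -> R.

Lemma psmulE f g n : psmul f g n = \sum_(k < n.+1) f k * g (n - k)%N.
Proof. by []. Qed.

Definition tr (n : nat) f : {poly R} := \poly_(i < n.+1) f i.

Lemma tr_coef n f i : (i <= n)%N -> (tr n f)`_i = f i.
Proof. by move=> le; rewrite coef_poly ltnS le. Qed.

Lemma psmul_tr f g n m : (m <= n)%N -> psmul f g m = (tr n f * tr n g)`_m.
Proof.
move=> le; rewrite coefM /psmul; apply: eq_bigr => i _.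
have hi : (i <= n)%N by apply: leq_trans le; rewrite -ltnS.
by rewrite !tr_coef // (leq_trans (leq_subr _ _) le).
Qed.

Lemma psmulC f g : psmul f g = psmul g f.
Proof. apply: functional_extensionality => n; by rewrite !(psmul_tr _ _ (leqnn n)) mulrC. Qed.

Lemma psmulA f g h : psmul f (psmul g h) = psmul (psmul f g) h.
Proof.
apply: functional_extensionality => n.
have -> : psmul (psmul f g) h n = ((tr n f * tr n g) * tr n h)`_n.
  rewrite coefM psmulE; apply: eq_bigr => i _.
  have hi : (i <= n)%N by rewrite -ltnS.
  by rewrite (psmul_tr _ _ hi) tr_coef // leq_subr.
rewrite -mulrA coefM psmulE; apply: eq_bigr => i _.
have hi : (i <= n)%N by rewrite -ltnS.
by rewrite (psmul_tr _ _ (leq_subr i n)) tr_coef.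
Qed.

Lemma psmul1 f : psmul (@psone R) f = f.
Proof.
apply: functional_extensionality => n.
rewrite /psmul big_ord_recl /= /psone eqxx mul1r subn0 big1 ?addr0 // => i _.
by rewrite mul0r.
Qed.

Lemma psmul1r f : psmul f (@psone R) = f.
Proof. by rewrite psmulC psmul1. Qed.

Lemma poly_psM (p q : {poly R}) : poly_ps (p * q) = psmul (poly_ps p) (poly_ps q).
Proof. by apply: functional_extensionality => n; rewrite /poly_ps coefM. Qed.

Lemma poly_ps1 : poly_ps (1 : {poly R}) = @psone R.
Proof. by apply: functional_extensionality => n; rewrite /poly_ps coef1. Qed.

Lemma psprod_map_mul (T : Type) (F G : T -> nat -> R) s :
  psprod [seq psmul (F x) (G x) | x <- s] =
  psmul (psprod [seq F x | x <- s]) (psprod [seq G x | x <- s]).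
Proof.
elim: s => [|x s IH] /=; first by rewrite /psprod /= psmul1.
rewrite /psprod /= -!/(psprod _) IH.
by rewrite -!psmulA; congr psmul; rewrite psmulC -!psmulA; congr psmul; rewrite psmulC.
Qed.

Lemma psprod_poly (T : Type) (p : T -> {poly R}) s :
  psprod [seq poly_ps (p x) | x <- s] = poly_ps (\prod_(x <- s) p x).
Proof.
elim: s => [|x s IH] /=; first by rewrite big_nil poly_ps1.
by rewrite big_cons poly_psM -IH.
Qed.

Lemma psmul_polyE (p : {poly R}) g n : psmul (poly_ps p) g n = (p * tr n g)`_n.
Proof.
rewrite coefM /psmul; apply: eq_bigr => i _; by rewrite tr_coef // leq_subr.
Qed.

End PS.

Lemma natE2 k : {h | k = h.*2} + {h | k = h.*2.+1}.
Proof.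
have := odd_double_half k; case: (odd k) => /= E; [right|left]; exists k./2;
by rewrite -[in LHS]E ?add0n.
Qed.

Section PS2.
Variable R : comRingType.
Implicit Types f g h : nat -> R.

Lemma ps_inv_uniq (p : {poly R}) g h :
  psmul (poly_ps p) g = @psone R -> psmul (poly_ps p) h = @psone R -> g = h.
Proof.
move=> Hg Hh.
by rewrite -[g]psmul1 -Hh [psmul (poly_ps p) h]psmulC -psmulA Hg psmul1r.
Qed.

Lemma psprod_inv (T : Type) s (p : T -> {poly R}) (g : T -> nat -> R) :
  (forall x, psmul (poly_ps (p x)) (g x) = @psone R) ->
  psmul (poly_ps (\prod_(x <- s) p x)) (psprod (map g s)) = @psone R.
Proof.
move=> H; rewrite -psprod_poly -psprod_map_mul.
elim: s => [|x s IH] //=.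
by rewrite /psprod /= -/(psprod _) IH H psmul1.
Qed.

Lemma prod_iota_const (x : {poly R}) m n : \prod_(i <- iota m n) x = x ^+ n.
Proof. by have := prodr_const_nat m (m + n) x; rewrite /index_iota addKn. Qed.

Lemma psmul_quad (a : R) g n : psmul (poly_ps (1 + a *: 'X^2)) g n =
  g n + (if (n < 2)%N then 0 else a * g (n - 2)%N).
Proof.
rewrite psmul_polyE mulrDl mul1r -scalerAl coefD coefZ coefXnM tr_coef //.
by case: ifP => _; rewrite ?mulr0 // tr_coef ?leq_subr.
Qed.

Lemma psmul_lin (c : R) g n : psmul (poly_ps (1 + c *: 'X)) g n =
  g n + (if n == 0%N then 0 else c * g n.-1).
Proof.
rewrite psmul_polyE mulrDl mul1r -scalerAl coefD coefZ coefXM tr_coef //.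
by case: ifP => _; rewrite ?mulr0 // tr_coef ?leq_pred.
Qed.

Lemma inv_lin_ok (c : R) : psmul (poly_ps (1 + c *: 'X)) (inv_lin c) = @psone R.
Proof.
apply: functional_extensionality => n; rewrite psmul_lin /inv_lin /psone.
case: n => [|n] /=; first by rewrite expr0 addr0.
by rewrite exprS mulNr addNr.
Qed.

Lemma inv_quad_ok (a : R) : psmul (poly_ps (1 + a *: 'X^2)) (inv_quad a) = @psone R.
Proof.
apply: functional_extensionality => n; rewrite psmul_quad /inv_quad /psone.
case: n => [|[|n]] /=; first by rewrite expr0 addr0.
  by rewrite addr0.
rewrite subn2 /= negbK; case: (odd n); first by rewrite mulr0 addr0.
by rewrite exprS mulNr addNr.
Qed.

Lemma coef_binom_quad (a : R) j k : ((1 + a *: 'X^2) ^+ j)`_k =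
  if odd k then 0 else 'C(j, k./2)%:R * a ^+ (k./2).
Proof.
rewrite addrC exprD1n coef_sum.
under eq_bigr do rewrite coefMn exprZn -exprM coefZ coefXn.
have [[h ->] | [h ->]] := natE2 k.
- rewrite odd_double doubleK.
  transitivity (\sum_(i < j.+1 | (i : nat) == h) a ^+ h *+ 'C(j, h)).
    rewrite [RHS]big_mkcond /=; apply: eq_bigr => i _.
    case: (eqVneq (i : nat) h) => [-> | ne]; first by rewrite mul2n eqxx mulr1.
    by rewrite mul2n (inj_eq double_inj) eq_sym (negbTE ne) mulr0 mul0rn.
  rewrite (big_ord1_eq _ (fun _ => a ^+ h *+ 'C(j, h))) ltnS; case: leqP => hj; first by rewrite mulr_natl.
  by rewrite bin_small // mul0r.
- rewrite /= odd_double /= big1 // => i _.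
  case: eqP => [E|_]; last by rewrite mulr0 mul0rn.
  by have := congr1 odd E; rewrite /= mul2n !odd_double.
Qed.

End PS2.


Lemma sum_even (R : nmodType) (F : nat -> R) N :
  (forall k, odd k -> F k = 0) ->
  \sum_(k < N.+1) F k = \sum_(m < N./2.+1) F (m.*2).
Proof.
move=> H; elim: N => [|N IH]; first by rewrite !big_ord_recl !big_ord0.
rewrite big_ord_recr /= IH.
have [[h E] | [h E]] := natE2 N; rewrite E.
- rewrite H /=; last by rewrite odd_double.
  by rewrite addr0 uphalf_double doubleK.
- rewrite /= uphalf_double doubleK -/(nat_of_bool true).
  rewrite [in RHS]big_ord_recr /=. done.
Qed.
Lemma size_Qseq k j : size (Qseq k j) = k.+1.
Proof. by elim: k => //= k IH; rewrite size_rcons IH. Qed.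

Lemma nth_Qseq k i j : (i <= k)%N -> nth 0 (Qseq k j) i = Q i j.
Proof.
elim: k i => [|k IH] i; first by rewrite leqn0 => /eqP ->.
rewrite leq_eqVlt => /orP [/eqP -> //| lt].
by rewrite /= nth_rcons size_Qseq lt IH.
Qed.

Lemma Q0 j : Q 0 j = 1. Proof. by []. Qed.

Lemma QS k j : Q k.+1 j = - \sum_(i < k.+1) sigma i.+1 j * Q (k - i) j.
Proof.
rewrite /Q /= nth_rcons size_Qseq ltnn eqxx; congr (- _); apply: eq_bigr => i _.
by rewrite nth_Qseq // leq_subr.
Qed.

Lemma sigma0 j : sigma 0 j = 1.
Proof.
rewrite /sigma (big_pred1 set0) ?big_set0 // => S /=.
rewrite cards_eq0; case: eqP => [-> | //] /=.
by apply/forall_inP => x; rewrite in_set0.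
Qed.

Lemma coef_prod_sigma (c : rat) n j :
  (\prod_(i < j) (1 + (c * i%:R) *: 'X) : {poly rat})`_n = c ^+ n * sigma n j.
Proof.
under eq_bigr do rewrite addrC.
rewrite bigA_distr coef_sum.
transitivity (\sum_(J : {set 'I_j} | #|J| == n) \prod_(i in J) (c * (i : nat)%:R)).
  rewrite [RHS]big_mkcond /=; apply: eq_big => [J|J _] //.
  rewrite -big_mkcond /=.
  under eq_bigr do rewrite -mul_polyC.
  rewrite big_split /= prodr_const -rmorph_prod coefCM coefXn.
  by rewrite eq_sym; case: eqP => _; rewrite ?mulr1 ?mulr0.
rewrite /sigma mulr_sumr (bigID (fun J : {set 'I_j} => [forall n in J, (0 < (n : nat))%N])) /=.
rewrite [X in _ + X]big1 ?addr0.
  apply: eq_bigr => J /andP [/eqP hJ _].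
  by rewrite big_split /= prodr_const hJ.
move=> J /andP [_ /forall_inPn [i iJ]]; rewrite -eqn0Ngt => /eqP i0.
by rewrite (bigD1 i) //= i0 mulr0 mul0r.
Qed.
Lemma coef_prod_sigmaP (c : rat) n j :
  (\prod_(i < j) (1 + ((c * i%:R)%:P) *: 'X) : {poly {poly rat}})`_n =
  (c ^+ n * sigma n j)%:P.
Proof.
rewrite -coef_prod_sigma -(coef_map (@polyC rat)); apply: (congr1 (fun p : {poly _} => p`_n)).
rewrite rmorph_prod; apply: eq_bigr => i _.
by rewrite rmorphD rmorph1 /= map_polyZ map_polyX.
Qed.

Lemma big_iota0 (F : nat -> {poly {poly rat}}) j :
  \prod_(i <- iota 0 j) F i = \prod_(i < j) F i.
Proof. by rewrite -(big_mkord xpredT) /index_iota subn0. Qed.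

Lemma Gpoly_coef j n :
  (\prod_(i <- iota 0 j) (1 + (i%:R : {poly rat}) *: 'X))`_n = (sigma n j)%:P.
Proof.
have := coef_prod_sigmaP 1 n j; rewrite expr1n mul1r => <-.
rewrite big_iota0; apply: (congr1 (fun p : {poly _} => p`_n)); apply: eq_bigr => i _.
by rewrite mul1r polyC_natr.
Qed.

Lemma Hpoly_coef j n : (0 < j)%N ->
  (\prod_(k <- iota 1 j.-1) (1 + (- (k%:R : {poly rat})) *: 'X))`_n =
  ((-1) ^+ n * sigma n j)%:P.
Proof.
case: j => // j _ /=.
rewrite -coef_prod_sigmaP -(big_iota0 (fun i => 1 + ((-1 * i%:R : rat)%:P) *: ('X : {poly {poly rat}}))) /= big_cons mulr0 polyC0 scale0r addr0 mul1r.
apply: (congr1 (fun p : {poly _} => p`_n)); apply: eq_bigr => i _.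
by rewrite mulN1r polyCN polyC_natr.
Qed.

Definition Qs j : nat -> {poly rat} := fun n => (Q n j)%:P.

Lemma Qs_inv j :
  psmul (poly_ps (\prod_(i <- iota 0 j) (1 + (i%:R : {poly rat}) *: 'X))) (Qs j)
  = @psone _.
Proof.
apply: functional_extensionality => n; rewrite psmulE.
transitivity (\sum_(k < n.+1) (sigma k j)%:P * Qs j (n - k)).
  by apply: eq_bigr => k _; congr (_ * _); apply: Gpoly_coef.
case: n => [|n].
  by rewrite big_ord_recl big_ord0 /Qs sigma0 Q0 mulr1 addr0.
rewrite big_ord_recl /= subn0 /Qs sigma0 QS.
under eq_bigr do rewrite subSS.
under eq_bigr do rewrite -polyCM.
rewrite -rmorph_sum -polyCM -rmorphD mul1r.
have -> : \sum_(i < n.+1) sigma (bump 0 i) j * Q (n - i) j =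
  \sum_(i < n.+1) sigma i.+1 j * Q (n - i) j by [].
by rewrite addNr.
Qed.

Lemma Gser_eq j : Gser ('X : {poly rat}) j =
  psmul (poly_ps ((1 + 'X *: 'X^2) ^+ j)) (Qs j).
Proof.
rewrite /Gser psprod_map_mul psprod_poly prod_iota_const; congr psmul.
apply: (ps_inv_uniq (p := \prod_(i <- iota 0 j) (1 + (i%:R : {poly rat}) *: 'X))).
  by apply: psprod_inv => i; apply: inv_lin_ok.
exact: Qs_inv.
Qed.

Lemma gbinom0 (al : rat) : gbinom al 0 = 1.
Proof. by rewrite /gbinom big_ord0 divr1. Qed.

Lemma gbinom_zero k : gbinom 0 k.+1 = 0.
Proof. by rewrite /gbinom big_ord_recl subr0 mul0r mul0r. Qed.

Lemma gbinom_pascal (al : rat) k :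
  gbinom al k.+1 = gbinom (al - 1) k.+1 + gbinom (al - 1) k.
Proof.
rewrite /gbinom big_ord_recl big_ord_recr /=.
set P := \prod_(i < k) (al - 1 - i%:R).
have -> : \prod_(i < k) (al - (bump 0 i)%:R) = P.
  apply: eq_bigr => i _; rewrite /bump /= add1n -addn1 natrD; ring.
rewrite factS natrM subr0.
have hk : (k`!)%:R != 0 :> rat by rewrite pnatr_eq0 -lt0n fact_gt0.
have hk1 : (k.+1)%:R != 0 :> rat by rewrite pnatr_eq0.
rewrite -natr1 in hk1 *.
by field; rewrite hk hk1.
Qed.

Definition T (m : nat) : nat -> {poly rat} :=
  fun n => if odd n then 0 else (gbinom (- m%:R) n./2)%:P * 'X ^+ n./2.

Lemma T0 : T 0 = @psone _.
Proof.
apply: functional_extensionality => n; rewrite /T /psone.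
have [[h ->] | [h ->]] := natE2 n.
  rewrite odd_double doubleK; case: h => [|h]; first by rewrite gbinom0 mul1r.
  by rewrite oppr0 gbinom_zero mul0r.
by rewrite /= odd_double.
Qed.

Lemma T_step m : psmul (poly_ps (1 + 'X *: 'X^2)) (T m.+1) = T m.
Proof.
apply: functional_extensionality => n; rewrite psmul_quad /T.
case: n => [|[|n]] /=; first by rewrite !gbinom0 addr0.
  by rewrite addr0.
rewrite subn2 /= negbK; case: (odd n); first by rewrite mulr0 addr0.
have E : (- (m.+1)%:R : rat) = - m%:R - 1 by rewrite -addn1 natrD opprD.
rewrite E [gbinom (- m%:R) _]gbinom_pascal rmorphD mulrDl exprS /=.
by rewrite [X in _ + X = _]mulrCA.
Qed.

Lemma Tinv m : psmul (poly_ps ((1 + 'X *: 'X^2) ^+ m)) (T m) = @psone _.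
Proof.
elim: m => [|m IH]; first by rewrite expr0 poly_ps1 psmul1 T0.
by rewrite exprSr poly_psM -psmulA T_step.
Qed.

Definition Hp j : {poly {poly rat}} :=
  \prod_(k <- iota 1 j.-1) (1 + (- (k%:R : {poly rat})) *: 'X).

Lemma Hser_eq j : Hser ('X : {poly rat}) j = psmul (poly_ps (Hp j)) (T j.-1).
Proof.
rewrite /Hser (psprod_map_mul (fun k : nat => poly_ps (1 + (- (k%:R : {poly rat})) *: 'X))
  (fun _ => inv_quad ('X : {poly rat}))) psprod_poly; congr psmul.
apply: (ps_inv_uniq (p := (1 + 'X *: 'X^2) ^+ j.-1)); last exact: Tinv.
rewrite -(prod_iota_const _ 1); apply: psprod_inv => _; exact: inv_quad_ok.
Qed.
Theorem lemma2p3 (j : nat) (hj : (0 < j)%N) (N : nat) :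
  Gser ('X : {poly rat}) j N =
    \sum_(m < N./2.+1) ((('C(j, m))%:R * Q (N - 2 * m) j)%:P * 'X ^+ m)
  /\
  Hser ('X : {poly rat}) j N =
    \sum_(m < N./2.+1)
      (((-1) ^+ N * gbinom (1 - j%:R) m * sigma (N - 2 * m) j)%:P * 'X ^+ m).
Proof.
split.
  rewrite Gser_eq psmulE.
  rewrite (@sum_even _ (fun k => poly_ps ((1 + 'X *: 'X^2) ^+ j) k * Qs j (N - k)) N); last first.
    by move=> k ok; rewrite /poly_ps coef_binom_quad ok mul0r.
  apply: eq_bigr => m _.
  rewrite /poly_ps coef_binom_quad odd_double doubleK /Qs -mul2n.
  by rewrite polyCM polyC_natr mulrAC.
rewrite Hser_eq psmulC psmulE.
rewrite (@sum_even _ (fun k => T j.-1 k * poly_ps (Hp j) (N - k)) N); last first.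
  by move=> k ok; rewrite /T ok mul0r.
apply: eq_bigr => m /= hm.
have hm2 : (2 * m <= N)%N.
  rewrite mul2n -[X in (_ <= X)%N]odd_double_half (leq_trans _ (leq_addl _ _)) //.
  by rewrite leq_double -ltnS.
rewrite /T odd_double doubleK /poly_ps /Hp Hpoly_coef // -mul2n.
have -> : ((-1) ^+ (N - 2 * m) : rat) = (-1) ^+ N.
  by rewrite -signr_odd oddB // oddM /= addbF signr_odd.
have -> : (- (j.-1)%:R : rat) = 1 - j%:R.
  by case: j hj => // j _; rewrite /= -addn1 natrD; ring.
rewrite !polyCM; ring.
Qed.
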